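(* For all positive integers $A,B$, with $n=A+B$, $$\mathrm{exa}_1(n,K_{A,B})=\binom{n}{2}-A-B+\mathrm{mup}(A,B).$$
   Context: $K_{A,B}$ is the complete bipartite graph with parts of sizes $A$ and $B$. For graphs $H,F$, $\mathcal N(H,F)$ is the number of subgraphs of $H$ isomorphic to $F$, and $\mathrm{exa}_1(n,F)$ is the largest number of edges of a simple graph $H$ on $n$ vertices with $\mathcal N(H,F)=1$. A unique partition of $A$ and $B$ consists of positive integers $A_1,\dots,A_a$ with $\sum_i A_i=A$ and $B_1,\dots,B_b$ with $\sum_j B_j=B$ such that, viewing these as $a+b$ indexed items, the only subsets of the items whose sum equals $A$ are the set of items $\{A_1,\dots,A_a\}$ and, in case $A=B$, also its complement $\{B_1,\dots,B_b\}$ (so e.g. $A_i\ne B_j$ is forced when $A\ne B$, while equal values among the $A_i$ are allowed). $\mathrm{mup}(A,B)$ is the maximum of $a+b$ over all unique partitions of $A$ and $B$, with the convention $\mathrm{mup}(1,1)=2$. *)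

(* Defs.v *)
From mathcomp Require Import all_boot.
Set Implicit Arguments. Unset Strict Implicit. Unset Printing Implicit Defensive.

Definition simple_graph (n : nat) (E : {set {set 'I_n}}) : bool :=
  [forall e in E, #|e| == 2].

Definition K_bip (A B : nat) : {set {set 'I_(A + B)}} :=
  [set e : {set 'I_(A + B)} | [exists i : 'I_(A + B), exists j : 'I_(A + B),
     [&& (i : nat) < A, A <= (j : nat) & e == [set i; j]]]].

(* N(H,F): number of subgraphs (W,S) of H = ('I_n, E) (W a vertex subset,
   S a subset of E) isomorphic to F = ('I_m, EF), i.e. there is a bijection
   f : 'I_m -> W mapping the edge set EF onto S. *)
Definition Ncopies (n m : nat) (E : {set {set 'I_n}}) (EF : {set {set 'I_m}})
  : nat :=
  #|[set p : {set 'I_n} * {set {set 'I_n}} |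
      (p.2 \subset E) &&
      [exists f : {ffun 'I_m -> 'I_n},
         [&& injectiveb f, p.1 == f @: 'I_m & p.2 == [set f @: (e : {set 'I_m}) | e in EF]]]]|.

Definition exa1 (n m : nat) (EF : {set {set 'I_m}}) : nat :=
  \max_(E : {set {set 'I_n}} | simple_graph E && (Ncopies E EF == 1)) #|E|.

(* Unique partition of A and B: items sA ++ sB (indexed by position). *)
Definition unique_partition (A B : nat) (sA sB : seq nat) : Prop :=
  [/\ all (fun x => 0 < x) (sA ++ sB), sumn sA = A, sumn sB = B &
    forall I : {set 'I_(size sA + size sB)},
      \sum_(i in I) nth 0 (sA ++ sB) i = A ->
      I = [set i : 'I_(size sA + size sB) | (i : nat) < size sA] \/
      (A = B /\ I = [set i : 'I_(size sA + size sB) | size sA <= (i : nat)])].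

(* m = mup(A,B): the maximum of a+b over unique partitions, with the
   convention mup(1,1) = 2. *)
Definition mup_spec (A B m : nat) : Prop :=
  if (A == 1) && (B == 1) then m = 2 else
  (exists sA sB, unique_partition A B sA sB /\ size sA + size sB = m) /\
  (forall sA sB, unique_partition A B sA sB -> size sA + size sB <= m).

(* Main.v *)
Require Import Defs.
From mathcomp Require Import all_boot zify.
From Stdlib Require Import Classical.
Set Implicit Arguments. Unset Strict Implicit. Unset Printing Implicit Defensive.


Section Forest.
Variable T : finType.

Definition closedF (F : {set {set T}}) (X : {set T}) :=
  forall x y, [set x; y] \in F -> (x \in X) = (y \in X).
Definition respects (U : Type) (c : T -> U) (X : {set T}) :=
  forall x y, c x = c y -> (x \in X) = (y \in X).

Lemma forest_labels (F : {set {set T}}) :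
  (forall e, e \in F -> #|e| = 2) ->
  exists c : T -> T, (forall X, closedF F X -> respects c X) /\
    (forall X, respects c X -> closedF F X) /\ #|T| <= #|F| + #|c @: T|.
Proof.
move: {2}#|F| (erefl #|F|) => N; elim: N F => [|N IH] F hN hF.
  have -> : F = set0 by apply/eqP; rewrite -cards_eq0 hN.
  exists id; split; [by move=> X _ x y -> | split].
    by move=> X _ x y; rewrite inE.
  by rewrite cards0 add0n card_imset.
have [e eF] : exists e, e \in F.
  by apply/set0Pn; rewrite -card_gt0 hN.
have /eqP/cards2P [u [v [uv ee]]] := hF e eF.
have hF' : forall e', e' \in F :\ e -> #|e'| = 2.
  by move=> e'; rewrite inE => /andP [_]; apply: hF.
have hN' : #|F :\ e| = N by rewrite (cardsD1 e F) eF in hN; case: hN.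
have [c [h1 [h2 h3]]] := IH _ hN' hF'.
pose c' x := if c x == c v then c u else c x.
exists c'; split; [|split].
- move=> X hX.
  have hX' : closedF (F :\ e) X.
    by move=> x y; rewrite inE => /andP [_]; apply: hX.
  have hr := h1 _ hX'.
  have huv : (u \in X) = (v \in X) by apply: hX; rewrite -ee.
  move=> x y; rewrite /c'.
  case: eqP => hx; case: eqP => hy.
  + by move=> _; apply: hr; rewrite hx hy.
  + by move=> hxy; rewrite (hr _ _ hx) -huv; apply: hr.
  + by move=> hxy; rewrite (hr y v hy) -huv; apply: hr.
  + by apply: hr.
- move=> X hX.
  have hr : respects c X.
    by move=> x y hxy; apply: hX; rewrite /c' hxy.
  have huv : (u \in X) = (v \in X).
    apply: hX; rewrite /c' eqxx; by case: eqP.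
  move=> x y hxy.
  case: (eqVneq [set x; y] e) => [hxe | hxe].
    rewrite ee in hxe.
    have : x \in [set u; v] by rewrite -hxe !inE eqxx.
    have : y \in [set u; v] by rewrite -hxe !inE eqxx orbT.
    by rewrite !inE => /orP [] /eqP -> /orP [] /eqP ->.
  by apply: (h2 _ hr); apply/setD1P; split.
- have hsub : (c @: T) :\ c v \subset c' @: T.
    apply/subsetP => l /setD1P [hl /imsetP [x _ hx]].
    apply/imsetP; exists x => //; rewrite /c' -hx.
    by move/negbTE: hl => ->.
  have hc := subset_leq_card hsub.
  have hv : c v \in c @: T by apply: imset_f.
  rewrite (cardsD1 (c v) (c @: T)) hv hN' in h3.
  rewrite hN; lia.
Qed.
End Forest.


Section Copies.
Variables A B : nat.
Hypothesis hA : 0 < A.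
Hypothesis hB : 0 < B.
Local Notation n := (A + B).
Local Notation T := ('I_n).

Definition cross (X : {set T}) : {set {set T}} :=
  [set e : {set T} | [exists x in X, exists y in ~: X, e == [set x; y]]].

Lemma in_cross (X : {set T}) (x y : T) : x \in X -> y \notin X -> [set x; y] \in cross X.
Proof.
by move=> hx hy; rewrite inE; apply/existsP; exists x; rewrite hx; apply/existsP; exists y; rewrite inE hy eqxx.
Qed.

Lemma crossP (X : {set T}) (e : {set T}) : reflect (exists x y, [/\ x \in X, y \notin X & e = [set x; y]]) (e \in cross X).
Proof.
apply: (iffP idP).
  rewrite inE => /existsP [x /andP [hx /existsP [y /andP [hy /eqP he]]]].
  by exists x, y; split => //; rewrite inE in hy.
by move=> [x [y [hx hy ->]]]; apply: in_cross.
Qed.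

Lemma cross_setC (X : {set T}) : cross (~: X) = cross X.
Proof.
apply/setP => e; apply/crossP/crossP => [] [x [y [hx hy ->]]]; exists y, x.
  by split; [rewrite inE negbK in hy | rewrite inE in hx | rewrite setUC].
by split; [rewrite inE | rewrite inE negbK | rewrite setUC].
Qed.

Lemma cross_inj (X X' : {set T}) : X != set0 -> ~: X != set0 -> cross X' = cross X ->
  X' = X \/ X' = ~: X.
Proof.
move=> /set0Pn [x hx] /set0Pn [y hy] hc.
rewrite inE in hy.
have : [set x; y] \in cross X' by rewrite hc in_cross.
move=> /crossP [x' [y' [hx' hy' he]]].
have hxy : forall z, z \in [set x; y] -> z = x \/ z = y.
  by move=> z; rewrite !inE => /orP [] /eqP ->; [left|right].
have hxy' : forall z, z \in [set x'; y'] -> z = x' \/ z = y'.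
  by move=> z; rewrite !inE => /orP [] /eqP ->; [left|right].
have xin : x \in [set x'; y'] by rewrite -he !inE eqxx.
have yin : y \in [set x'; y'] by rewrite -he !inE eqxx orbT.
have xneqy : x != y by apply/eqP => exy; move: hx hy; rewrite exy => ->.
have key : forall Z : {set T}, (x \in Z) -> (y \notin Z) -> cross Z = cross X -> Z = X.
  move=> Z hxZ hyZ hcZ; apply/setP => z.
  case hz: (z \in X).
    have : [set z; y] \in cross Z by rewrite hcZ in_cross.
    move=> /crossP [a [b [ha hb hab]]].
    have : a \in [set z; y] by rewrite hab !inE eqxx.
    rewrite !inE => /orP [/eqP <- // | /eqP eay].
    by move: hyZ; rewrite -eay ha.
  have : [set x; z] \in cross Z by rewrite hcZ in_cross // hz.
  move=> /crossP [a [b [ha hb hab]]].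
  have : b \in [set x; z] by rewrite hab !inE eqxx orbT.
  rewrite !inE => /orP [/eqP ebx | /eqP <-]; last by apply/negbTE.
  by move: hxZ; rewrite -ebx (negbTE hb).
case: (hxy' _ xin) => ex.
  left; apply: key => //; first by rewrite ex.
  case: (hxy' _ yin) => ey; last by rewrite ey.
  by move: xneqy; rewrite ex ey eqxx.
right; rewrite -[X' in X' = _]setCK; congr (~: _).
apply: key.
- by rewrite inE ex.
- rewrite inE negbK.
  case: (hxy' _ yin) => ey; first by rewrite ey.
  by move: xneqy; rewrite ex ey eqxx.
- by rewrite cross_setC.
Qed.

Lemma card_ltA : #|[set i : T | i < A]| = A.
Proof.
have -> : [set i : T | i < A] = [set widen_ord (leq_addr B A) i | i : 'I_A].
  apply/setP => i; rewrite inE; apply/idP/imsetP => [hi | [j _ ->]].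
    by exists (Ordinal hi) => //; apply: val_inj.
  exact: ltn_ord j.
rewrite card_imset; first by rewrite card_ord.
by move=> i j hij; apply: val_inj; exact: (congr1 val hij).
Qed.

Definition copies (E : {set {set T}}) :=
  [set p : {set T} * {set {set T}} |
      (p.2 \subset E) &&
      [exists f : {ffun T -> T},
         [&& injectiveb f, p.1 == f @: T & p.2 == [set f @: (e : {set T}) | e in K_bip A B]]]].

Lemma NcopiesE (E : {set {set T}}) : Ncopies E (K_bip A B) = #|copies E|.
Proof. reflexivity. Qed.

Lemma K_bipP (e : {set T}) :
  reflect (exists i j : T, [/\ (i : nat) < A, A <= (j : nat) & e = [set i; j]]) (e \in K_bip A B).
Proof.
rewrite inE; apply: (iffP existsP).
  by move=> [i /existsP [j /and3P [hi hj /eqP he]]]; exists i, j.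
by move=> [i [j [hi hj he]]]; exists i; apply/existsP; exists j; rewrite hi hj he eqxx.
Qed.

Lemma imset_cross (f : T -> T) : injective f ->
  [set f @: (e : {set T}) | e in K_bip A B] = cross (f @: [set i : T | i < A]).
Proof.
move=> finj.
have [g fg gf] := injF_bij finj.
apply/setP => e; apply/imsetP/crossP.
  move=> [e0 /K_bipP [i [j [hi hj ->]]] ->].
  exists (f i), (f j); split.
  - by apply: imset_f; rewrite inE.
  - apply/imsetP => [[k]]; rewrite inE => hk /finj ejk.
    by move: hk; rewrite -ejk ltnNge hj.
  - by rewrite imsetU1 imset_set1.
move=> [x [y [/imsetP [i hi ->] hy ->]]].
exists [set i; g y].
  apply/K_bipP; exists i, (g y); split => //; first by rewrite inE in hi.
  rewrite leqNgt; apply/negP => hgy; move: hy; rewrite -[y]gf.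
  by rewrite imset_f // inE.
by rewrite imsetU1 imset_set1 gf.
Qed.

Lemma copy_of (E : {set {set T}}) p : p \in copies E ->
  p.1 = setT /\ exists X : {set T}, [/\ #|X| = A, p.2 = cross X & cross X \subset E].
Proof.
rewrite inE => /andP [hsub /existsP [f /and3P [/injectiveP finj /eqP h1 /eqP h2]]].
split.
  have [g fg gf] := injF_bij finj.
  rewrite h1; apply/setP => x; rewrite inE; apply/imsetP; exists (g x) => //.
exists (f @: [set i : T | i < A]); split.
- by rewrite card_imset // card_ltA.
- by rewrite h2 imset_cross.
- by rewrite -imset_cross // -h2.
Qed.

Lemma copy_to (E : {set {set T}}) (X : {set T}) : #|X| = A -> cross X \subset E ->
  (setT, cross X) \in copies E.
Proof.
move=> hX hsub.
have x0 : T by exists 0; rewrite addn_gt0 hA.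
pose s := enum X ++ enum (~: X).
have hs : size s = n by rewrite size_cat -!cardE cardsC card_ord.
pose f := [ffun i : T => nth x0 s i].
have suniq : uniq s.
  rewrite cat_uniq !enum_uniq /= andbT; apply/hasPn => x; rewrite mem_enum inE => hx.
  by rewrite mem_enum.
have finj : injective f.
  move=> i j; rewrite !ffunE => /eqP; rewrite nth_uniq ?hs // => /eqP; apply: val_inj.
have himg : f @: [set i : T | i < A] = X.
  apply/eqP; rewrite eqEcard card_imset // card_ltA hX leqnn andbT.
  apply/subsetP => x /imsetP [i]; rewrite inE => hi ->; rewrite ffunE nth_cat.
  rewrite -cardE hX hi -mem_enum; apply: mem_nth.
  by rewrite -cardE hX.
rewrite inE /= hsub; apply/existsP; exists f.
rewrite -himg imset_cross // eqxx andbT; apply/andP; split; first exact/injectiveP.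
have [g fg gf] := injF_bij finj.
by apply/eqP/setP => x; rewrite inE; apply/esym/imsetP; exists (g x).
Qed.
End Copies.


Section Char.
Variables A B : nat.
Hypothesis hA : 0 < A.
Hypothesis hB : 0 < B.
Local Notation n := (A + B).
Local Notation T := ('I_n).

Lemma ncopies_char (E : {set {set T}}) (X0 : {set T}) : #|X0| = A -> cross X0 \subset E ->
  (forall X : {set T}, #|X| = A -> cross X \subset E -> X = X0 \/ X = ~: X0) ->
  Ncopies E (K_bip A B) = 1.
Proof.
move=> hX0 hsub huniq; rewrite NcopiesE; apply/eqP/cards1P.
exists (setT, cross X0); apply/setP => p; rewrite inE; apply/idP/eqP.
  move=> hp; have [h1 [X [hX h2 hs]]] := copy_of hp.
  case: p h1 h2 hp => p1 p2 /= -> ->.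
  by case: (huniq _ hX hs) => ->; rewrite ?cross_setC.
by move=> ->; apply: copy_to.
Qed.

Lemma ncopies_one (E : {set {set T}}) : Ncopies E (K_bip A B) = 1 ->
  exists X0 : {set T}, [/\ #|X0| = A, cross X0 \subset E &
   forall X : {set T}, #|X| = A -> cross X \subset E -> X = X0 \/ X = ~: X0].
Proof.
rewrite NcopiesE => /eqP/cards1P [p hp].
have : p \in copies E by rewrite hp set11.
move=> /copy_of [h1 [X0 [hX0 h2 hs]]].
exists X0; split => // X hX hXs.
have : (setT, cross X) \in copies E by apply: copy_to.
rewrite hp inE => /eqP hpX.
apply: cross_inj.
- by rewrite -card_gt0 hX0.
- by rewrite -card_gt0; move: (cardsC X0); rewrite card_ord hX0; lia.
- by rewrite -h2 -hpX.
Qed.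

Definition compl2 (E : {set {set T}}) := [set e : {set T} | #|e| == 2] :\: E.

Lemma closed_cross (E : {set {set T}}) (X : {set T}) :
  closedF (compl2 E) X <-> cross X \subset E.
Proof.
split.
  move=> hc; apply/subsetP => e /crossP [x [y [hx hy ->]]].
  apply/negPn/negP => hE.
  have : [set x; y] \in compl2 E.
    have xy : x != y by apply/eqP => exy; move: hy; rewrite -exy hx.
    by rewrite inE hE inE cards2 xy.
  by move=> /hc; rewrite hx (negbTE hy).
move=> hs x y; rewrite inE => /andP [hE _].
case hx: (x \in X); case hy: (y \in X) => //.
  by move: hE; rewrite (subsetP hs) // in_cross // hy.
by move: hE; rewrite setUC (subsetP hs) // in_cross // hx.
Qed.

End Char.


Lemma sum_all (s : seq nat) : \sum_(j < size s) nth 0 s j = sumn s.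
Proof. by rewrite sumnE (big_nth 0) big_mkord. Qed.

Lemma sum_first (s1 s2 : seq nat) :
  \sum_(j < size s1 + size s2 | j < size s1) nth 0 (s1 ++ s2) j = sumn s1.
Proof.
rewrite -(big_mkord (fun j => j < size s1)).
rewrite (@big_cat_nat _ _ _ (size s1)) ?leq_addr //=.
rewrite [X in _ + X]big_nat_cond [X in _ + X]big1 ?addn0; last first.
  by move=> i /andP [/andP [hi _]]; rewrite ltnNge hi.
rewrite -(sum_all s1) -(big_mkord xpredT) big_nat_cond [RHS]big_nat_cond.
apply: eq_big => [i|i /andP [/andP [_ hi] _]]; last by rewrite nth_cat hi.
by case h: (i < size s1); rewrite ?andbT ?andbF.
Qed.

Lemma sum_last (s1 s2 : seq nat) :
  \sum_(j < size s1 + size s2 | size s1 <= j) nth 0 (s1 ++ s2) j = sumn s2.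
Proof.
have := sum_all (s1 ++ s2); rewrite size_cat (bigID (fun j : 'I__ => j < size s1)) /=.
rewrite sum_first sumn_cat => /eqP; rewrite eqn_add2l => /eqP <-.
by apply: eq_bigl => j; rewrite leqNgt.
Qed.


Section Labels.
Variables A B : nat.
Local Notation n := (A + B).
Local Notation T := ('I_n).
Variables sA sB : seq nat.
Local Notation k := (size sA + size sB).
Local Notation s := (sA ++ sB).
Variable c : T -> 'I_k.
Hypothesis hfib : forall j, #|[set x | c x == j]| = nth 0 s j.
Hypothesis hpos : forall j : 'I_k, 0 < nth 0 s j.

Definition X0 := [set x : T | c x < size sA].

Lemma card_pre (I : {set 'I_k}) : #|[set x | c x \in I]| = \sum_(j in I) nth 0 s j.
Proof.
rewrite -sum1_card (partition_big c (mem I)) /=; last by move=> x; rewrite inE.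
apply: eq_bigr => j hj; rewrite -hfib -sum1_card.
by apply: eq_bigl => x; rewrite !inE; case: eqP => [->|]; rewrite ?hj ?andbF.
Qed.

Lemma respects_pre (X : {set T}) : respects c X -> X = [set x | c x \in c @: X].
Proof.
move=> hr; apply/setP => x; rewrite inE; apply/idP/imsetP => [hx|[y hy hxy]].
  by exists x.
by rewrite (hr _ _ hxy).
Qed.

Lemma fib_ne (j : 'I_k) : exists x, c x = j.
Proof.
have : 0 < #|[set x | c x == j]| by rewrite hfib hpos.
by rewrite card_gt0 => /set0Pn [x]; rewrite inE => /eqP; exists x.
Qed.

Lemma pre_inj (I I' : {set 'I_k}) : [set x | c x \in I] = [set x | c x \in I'] -> I = I'.
Proof.
move=> h; apply/setP => j; have [x <-] := fib_ne j.
by move/setP: h => /(_ x); rewrite !inE.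
Qed.

Lemma X0_pre : X0 = [set x | c x \in [set j : 'I_k | j < size sA]].
Proof. by apply/setP => x; rewrite !inE. Qed.

Lemma cX0_pre : ~: X0 = [set x | c x \in [set j : 'I_k | size sA <= j]].
Proof. by apply/setP => x; rewrite /X0 !inE ltnNge negbK. Qed.

Lemma cardX0 : #|X0| = sumn sA.
Proof.
rewrite X0_pre card_pre -(sum_first sA sB).
by apply: eq_bigl => j; rewrite inE.
Qed.

Lemma cardcX0 : #|~: X0| = sumn sB.
Proof.
rewrite cX0_pre card_pre -(sum_last sA sB).
by apply: eq_bigl => j; rewrite inE.
Qed.

Lemma up_of_labels : #|X0| = A ->
  (forall X : {set T}, respects c X -> #|X| = A -> X = X0 \/ (A = B /\ X = ~: X0)) ->
  unique_partition A B sA sB.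
Proof.
move=> hX0 huniq; split.
- apply/(all_nthP 0) => i; rewrite size_cat => hi; exact: (hpos (Ordinal hi)).
- by rewrite -cardX0.
- by rewrite -cardcX0; move: (cardsC X0); rewrite card_ord hX0; lia.
move=> I hI.
have hr : respects c [set x | c x \in I] by move=> x y hxy; rewrite !inE hxy.
have hc : #|[set x | c x \in I]| = A by rewrite card_pre.
case: (huniq _ hr hc) => [h | [hab h]].
  by left; apply: pre_inj; rewrite h X0_pre.
by right; split => //; apply: pre_inj; rewrite h cX0_pre.
Qed.

Lemma labels_of_up : unique_partition A B sA sB ->
  forall X : {set T}, respects c X -> #|X| = A -> X = X0 \/ (A = B /\ X = ~: X0).
Proof.
move=> [_ _ _ hu] X hr hX.
have hXe := respects_pre hr.
have : \sum_(j in c @: X) nth 0 s j = A by rewrite -card_pre -hXe.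
move=> /hu [h | [hab h]].
  by left; rewrite hXe h X0_pre.
by right; split => //; rewrite hXe h cX0_pre.
Qed.

End Labels.


Section Upper.
Variables A B : nat.
Hypothesis hA : 0 < A.
Hypothesis hB : 0 < B.
Local Notation n := (A + B).
Local Notation T := ('I_n).

Lemma card_compl2 (E : {set {set T}}) : simple_graph E ->
  #|E| + #|compl2 E| = 'C(n, 2).
Proof.
move=> /forall_inP hE.
have h := cardsID E [set e : {set T} | #|e| == 2].
rewrite card_draws card_ord in h; rewrite -h /compl2.
congr (_ + _); apply: eq_card => e; rewrite !inE.
by case he: (e \in E); rewrite ?andbT ?andbF //; rewrite hE.
Qed.

Lemma upper (E : {set {set T}}) : simple_graph E -> Ncopies E (K_bip A B) = 1 ->
  exists sA sB, unique_partition A B sA sB /\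
    #|E| + n <= 'C(n, 2) + (size sA + size sB).
Proof.
move=> hs hN.
have [Y [hY hYc hYu]] := ncopies_one hA hB hN.
have hF : forall e, e \in compl2 E -> #|e| = 2.
  by move=> e; rewrite inE => /andP [_]; rewrite inE => /eqP.
have [c0 [h1 [h2 h3]]] := forest_labels hF.
have hCE := card_compl2 hs.
have hrY : respects c0 Y by apply: h1; apply/closed_cross.
pose LA := enum (c0 @: Y); pose LB := enum (c0 @: ~: Y).
pose L := LA ++ LB.
pose g l := #|[set x | c0 x == l]|.
pose sA := [seq g l | l <- LA]; pose sB := [seq g l | l <- LB].
have hk : size L = size sA + size sB by rewrite size_cat !size_map.
have memL : forall x, c0 x \in L.
  move=> x; rewrite mem_cat !mem_enum; case hx: (x \in Y).
    by rewrite imset_f.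
  by rewrite orbC imset_f // inE hx.
have Luniq : uniq L.
  rewrite cat_uniq !enum_uniq andbT /=; apply/hasPn => l.
  rewrite !mem_enum => /imsetP [y hy ->]; apply/negP => /imsetP [x hx hxy].
  by move: hy; rewrite inE (hrY _ _ hxy) hx.
have cP : forall x, index (c0 x) L < size sA + size sB.
  by move=> x; rewrite -hk index_mem memL.
pose c x := Ordinal (cP x).
have hcc : forall x y, c0 x = c0 y -> c x = c y.
  by move=> x y hxy; apply: val_inj; rewrite /= hxy.
have hsL : sA ++ sB = [seq g l | l <- L] by rewrite map_cat.
have l0 : T by exists 0; rewrite addn_gt0 hA.
have hfib : forall j, #|[set x | c x == j]| = nth 0 (sA ++ sB) j.
  move=> j; rewrite hsL (nth_map (c0 l0)); last by rewrite hk.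
  apply: eq_card => x; rewrite !inE; apply/eqP/eqP.
    by move=> <- /=; rewrite nth_index.
  by move=> hx; apply: val_inj => /=; rewrite hx index_uniq // hk.
have hpos : forall j : 'I_(size sA + size sB), 0 < nth 0 (sA ++ sB) j.
  move=> j; rewrite -hfib card_gt0.
  have : nth (c0 l0) L j \in L by rewrite mem_nth // hk.
  rewrite mem_cat !mem_enum => /orP [] /imsetP [x _ hx];
    apply/set0Pn; exists x; rewrite inE; apply/eqP; apply: val_inj => /=;
    by rewrite -hx index_uniq // hk.
have hX0 : X0 c = Y.
  apply/setP => x; rewrite /X0 inE /= index_cat.
  case hm: (c0 x \in LA).
    rewrite size_map index_mem hm; move: hm; rewrite mem_enum => /imsetP [y hy hxy].
    by rewrite (hrY _ _ hxy) hy.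
  rewrite size_map ltnNge leq_addr /=.
  apply/esym/negbTE/negP => hx; move: hm; rewrite mem_enum imset_f //.
exists sA, sB; split.
  apply: (up_of_labels hfib hpos); first by rewrite hX0.
  move=> X hX hXA; rewrite hX0.
  have hX' : respects c0 X by move=> x y /hcc; apply: hX.
  have := hYu _ hXA (proj1 (closed_cross _ _) (h2 _ hX')).
  case => hXY; first by left.
  right; split => //.
  by move: (cardsC Y); rewrite card_ord hY -hXY hXA; lia.
have hcT : #|c0 @: setT| <= size sA + size sB.
  rewrite -hk size_cat -!cardE -(setUCr Y) imsetU cardsU; lia.
move: h3; rewrite card_ord.
have -> : [set c0 x | x : T] = c0 @: setT by apply/setP => l; apply/imsetP/imsetP => [] [x _ ->]; exists x.
move=> hh; rewrite -hCE -addnA leq_add2l; apply: leq_trans hh _; by rewrite leq_add2l.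
Qed.

End Upper.


Definition start (s : seq nat) j := sumn (take j s).

Lemma startS (s : seq nat) j : j < size s -> start s j.+1 = start s j + nth 0 s j.
Proof. by move=> hj; rewrite /start (take_nth 0 hj) sumn_rcons. Qed.

Lemma start_over (s : seq nat) j : size s <= j -> start s j = sumn s.
Proof. by move=> hj; rewrite /start take_oversize. Qed.

Lemma start_leS (s : seq nat) j : start s j <= start s j.+1.
Proof.
case: (ltnP j (size s)) => hj; first by rewrite startS // leq_addr.
by rewrite !start_over // (leq_trans hj).
Qed.

Lemma start_mono (s : seq nat) i j : i <= j -> start s i <= start s j.
Proof.
move=> hij; rewrite -(subnKC hij); elim: (j - i) => [|d IH]; first by rewrite addn0.
by rewrite addnS (leq_trans IH) // start_leS.
Qed.

Lemma start_size (s : seq nat) : start s (size s) = sumn s.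
Proof. exact: start_over. Qed.

Lemma lt_add_pos a b : 0 < b -> a < a + b.
Proof. lia. Qed.

Section Lower.
Variables A B : nat.
Hypothesis hA : 0 < A.
Hypothesis hB : 0 < B.
Local Notation n := (A + B).
Local Notation T := ('I_n).
Variables sA sB : seq nat.
Hypothesis hup : unique_partition A B sA sB.
Local Notation k := (size sA + size sB).
Local Notation s := (sA ++ sB).

Lemma hsum : sumn s = n.
Proof. by case: hup => _ h1 h2 _; rewrite sumn_cat h1 h2. Qed.

Lemma hposs j : j < k -> 0 < nth 0 s j.
Proof.
case: hup => /all_nthP hall _ _ _ hj.
by apply: (hall 0); rewrite size_cat.
Qed.

Lemma hsize : size s = k. Proof. by rewrite size_cat. Qed.

Definition Pb (x : T) j := x < start s j.+1.

Lemma hk0 : 0 < k.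
Proof. by rewrite -hsize lt0n size_eq0; apply/eqP => h0; move: hsum; rewrite h0 /=; lia. Qed.

Lemma start_k : start s k = n.
Proof. by rewrite -hsize start_size hsum. Qed.

Lemma has_b (x : T) : has (Pb x) (iota 0 k).
Proof.
apply/hasP; exists k.-1; first by rewrite mem_iota add0n /= prednK // hk0.
by rewrite /Pb prednK ?hk0 // start_k.
Qed.

Lemma find_lt (x : T) : find (Pb x) (iota 0 k) < k.
Proof. by rewrite -[X in _ < X](size_iota 0 k) -has_find has_b. Qed.

Definition cb (x : T) : 'I_k := Ordinal (find_lt x).

Lemma cb_lt (x : T) : x < start s (cb x).+1.
Proof.
have := nth_find 0 (has_b x); rewrite nth_iota ?find_lt //.
Qed.

Lemma cb_ge (x : T) : start s (cb x) <= x.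
Proof.
case hc: (val (cb x)) => [|i]; first by rewrite /start take0.
have hi : i < find (Pb x) (iota 0 k) by move: hc => /= ->.
have := before_find 0 hi; rewrite nth_iota; last first.
  by apply: ltn_trans hi (find_lt x).
by rewrite /Pb add0n => /negbT; rewrite -leqNgt.
Qed.

Lemma cbP (x : T) (j : 'I_k) : (cb x == j) = (start s j <= x < start s j.+1).
Proof.
apply/eqP/andP => [<-|[h1 h2]]; first by rewrite cb_ge cb_lt.
apply: val_inj => /=; apply/eqP; rewrite eqn_leq; apply/andP; split.
  rewrite leqNgt; apply/negP => hlt.
  have := before_find 0 hlt; rewrite nth_iota //= add0n.
  by rewrite /Pb h2.
rewrite leqNgt; apply/negP => hlt.
have := cb_lt x; rewrite ltnNge; move/negP; apply.
by apply: leq_trans (start_mono s hlt) h1.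
Qed.

Lemma card_ltb b : b <= n -> #|[set i : T | i < b]| = b.
Proof.
move=> hb.
have -> : [set i : T | i < b] = [set widen_ord hb i | i : 'I_b].
  apply/setP => i; rewrite inE; apply/idP/imsetP => [hi | [j _ ->]].
    by exists (Ordinal hi) => //; apply: val_inj.
  exact: ltn_ord j.
rewrite card_imset; first by rewrite card_ord.
by move=> i j hij; apply: val_inj; exact: (congr1 val hij).
Qed.

Lemma card_int a b : a <= b -> b <= n -> #|[set i : T | a <= i < b]| = b - a.
Proof.
move=> hab hbn.
have -> : [set i : T | a <= i < b] = [set i : T | i < b] :\: [set i : T | i < a].
  by apply/setP => i; rewrite !inE -leqNgt.
rewrite cardsD card_ltb //.
have -> : [set i : T | i < b] :&: [set i : T | i < a] = [set i : T | i < a].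
  by apply/setP => i; rewrite !inE; case h: (i < a); rewrite ?andbT ?andbF // (leq_trans h hab).
by rewrite card_ltb // (leq_trans hab hbn).
Qed.

Lemma start_n j : start s j <= n.
Proof.
case: (leqP j (size s)) => h; first by rewrite -hsum -start_size start_mono.
by rewrite start_over ?hsum // ltnW.
Qed.

Lemma hfib_b (j : 'I_k) : #|[set x | cb x == j]| = nth 0 s j.
Proof.
have hj : j < size s by rewrite hsize.
rewrite (eq_card (B := [set i : T | start s j <= i < start s j.+1])); last first.
  by move=> x; rewrite !inE cbP.
by rewrite card_int ?start_leS ?start_n // startS // addKn.
Qed.

Lemma hpos_b (j : 'I_k) : 0 < nth 0 s j.
Proof. exact: hposs. Qed.

Definition rb (x : T) : T := Ordinal (leq_ltn_trans (cb_ge x) (ltn_ord x)).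

Lemma cb_rb x : cb (rb x) = cb x.
Proof.
have hj : cb x < size s by rewrite hsize.
apply/eqP; rewrite cbP /= leqnn /= startS //.
by apply: lt_add_pos; apply: hposs; apply: find_lt.
Qed.

Lemma rb_cb x y : cb x = cb y -> rb x = rb y.
Proof. by move=> h; apply: val_inj; exact: (congr1 (fun j : 'I_k => start s j) h). Qed.

Definition Fb := [set [set x; rb x] | x in [set x | rb x != x]].

Lemma Fb2 e : e \in Fb -> #|e| = 2.
Proof. by move=> /imsetP [x]; rewrite inE eq_sym => hx ->; rewrite cards2 hx. Qed.

Lemma card_roots : #|[set x : T | rb x == x]| = k.
Proof.
set R := [set x : T | rb x == x].
have hinj : {in R &, injective cb}.
  move=> x y; rewrite !inE => /eqP hx /eqP hy /rb_cb; by rewrite hx hy.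
rewrite -(card_in_imset hinj).
have -> : cb @: R = setT.
  apply/setP => j; rewrite inE; apply/imsetP.
  have hjn : start s j < n.
    have hj : j < size s by rewrite hsize.
    apply: leq_trans (start_n j.+1); rewrite startS //.
    by apply: lt_add_pos; apply: hposs; apply: ltn_ord.
  have hcj : cb (Ordinal hjn) = j.
    have hj : j < size s by rewrite hsize.
    apply/eqP; rewrite cbP /= leqnn /= startS //.
    by apply: lt_add_pos; apply: hposs; apply: ltn_ord.
  exists (Ordinal hjn) => //.
  by rewrite inE; apply/eqP; apply: val_inj; exact: (congr1 (fun j : 'I_k => start s j) hcj).
by rewrite cardsT card_ord.
Qed.

Lemma card_Fb : #|Fb| + k <= n.
Proof.
have h1 : #|Fb| <= #|[set x : T | rb x != x]| by apply: leq_imset_card.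
have h2 : #|[set x : T | rb x != x]| + #|[set x : T | rb x == x]| = n.
  rewrite -[RHS](card_ord n) -(cardsC [set x : T | rb x == x]) addnC.
  by congr (_ + _); apply: eq_card => x; rewrite !inE.
by move: h2; rewrite card_roots; lia.
Qed.

Lemma closed_resp (X : {set T}) : closedF Fb X -> respects cb X.
Proof.
move=> hc.
have hx : forall x, (x \in X) = (rb x \in X).
  move=> x; case: (eqVneq (rb x) x) => [-> // | hne].
  by apply: hc; apply: imset_f; rewrite inE hne.
by move=> x y h; rewrite hx (hx y) (rb_cb h).
Qed.

Lemma resp_closed (X : {set T}) : respects cb X -> closedF Fb X.
Proof.
move=> hr x y /imsetP [z _ he]; apply: hr.
have hz : forall w, w \in [set z; rb z] -> cb w = cb z.
  by move=> w; rewrite !inE => /orP [] /eqP ->; rewrite ?cb_rb.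
by rewrite (hz x) ?(hz y) // -he !inE eqxx ?orbT.
Qed.

Definition Eb := [set e : {set T} | #|e| == 2] :\: Fb.

Lemma compl2_Eb : compl2 Eb = Fb.
Proof.
apply/setP => e; rewrite /compl2 /Eb !inE.
case he: (e \in Fb); rewrite ?andbF ?andbT //=.
all: try by rewrite (Fb2 he).
by case: (#|e| == 2).
Qed.

Lemma lower : exists E : {set {set T}}, [/\ simple_graph E, Ncopies E (K_bip A B) = 1 &
  'C(n, 2) + k <= #|E| + n].
Proof.
exists Eb; split.
- by apply/forall_inP => e; rewrite !inE => /andP [].
- have hX0 : #|X0 cb| = A by rewrite (cardX0 hfib_b); case: hup.
  apply: (ncopies_char hA hX0).
    by apply/closed_cross; rewrite compl2_Eb; apply: resp_closed => x y h; rewrite /X0 !inE h.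
  move=> X hX hXc.
  have := proj2 (closed_cross _ _) hXc; rewrite compl2_Eb => /closed_resp hr.
  by case: (labels_of_up hfib_b hup hr hX) => [->|[_ ->]]; [left|right].
- have := card_compl2 (E := Eb) _; rewrite compl2_Eb => h.
  have hs : simple_graph Eb by apply/forall_inP => e; rewrite !inE => /andP [].
  by rewrite -(h hs) -addnA leq_add2l card_Fb.
Qed.

End Lower.


Lemma bounded_max (P : nat -> Prop) N : (exists k, P k) -> (forall k, P k -> k <= N) ->
  exists m, P m /\ forall k, P k -> k <= m.
Proof.
elim: N => [|N IH] [k0 hk0] hb.
  exists k0; split => // k hk; have := hb _ hk; have := hb _ hk0; lia.
case: (classic (P N.+1)) => hN.
  by exists N.+1; split.
apply: IH; first by exists k0.
move=> k hk; have := hb _ hk; rewrite leq_eqVlt => /orP [/eqP ek|//].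
by move: hk; rewrite ek.
Qed.

Lemma size_le_sumn (s : seq nat) : all (fun x => 0 < x) s -> size s <= sumn s.
Proof. by elim: s => //= x s IH /andP [hx /IH]; lia. Qed.

Lemma ord2_cases (i : 'I_2) : i = ord0 \/ i = lift ord0 ord0.
Proof. by case: i => [[|[|i]] hi]; [left|right|]; try apply: val_inj. Qed.

Lemma single_up A B : 0 < A -> 0 < B -> unique_partition A B [:: A] [:: B].
Proof.
move=> hA hB; split => //=; first by rewrite hA hB.
- by rewrite addn0.
- by rewrite addn0.
move=> I; rewrite big_mkcond /= !big_ord_recl big_ord0 /=.
have hI : forall b0 b1 : bool, (ord0 \in I) = b0 -> (lift ord0 ord0 \in I) = b1 ->
  I = [set i : 'I_2 | (i == ord0) && b0 || (i == lift ord0 ord0) && b1].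
  move=> b0 b1 h0 h1; apply/setP => i; rewrite inE.
  case: (ord2_cases i) => ->; rewrite ?h0 ?h1 eqxx; clear h0 h1; by case: b0; case: b1.
case h0: (ord0 \in I); case h1: (lift ord0 ord0 \in I) => /= h; try lia.
- left; rewrite (hI _ _ h0 h1); apply/setP => i; rewrite !inE.
  by case: (ord2_cases i) => ->.
- right; split; first lia.
  rewrite (hI _ _ h0 h1); apply/setP => i; rewrite !inE.
  by case: (ord2_cases i) => ->.
Qed.

Theorem proposition3p1 (A B : nat) (hA : 0 < A) (hB : 0 < B) :
  exists m, mup_spec A B m /\
    exa1 (A + B) (K_bip A B) + A + B = 'C(A + B, 2) + m.
Proof.
pose P k := exists sA sB, unique_partition A B sA sB /\ size sA + size sB = k.
have hP2 : P 2 by exists [:: A], [:: B]; split => //; apply: single_up.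
have hb : forall k, P k -> k <= A + B.
  move=> k [sA [sB [[hall h1 h2 _] <-]]].
  by rewrite -size_cat -h1 -h2 -sumn_cat size_le_sumn.
have [m [hm hmax]] := bounded_max (ex_intro _ 2 hP2) hb.
exists m; split.
  rewrite /mup_spec; case: ifP => [/andP [/eqP eA /eqP eB] | _].
    have := hb _ hm; have := hmax _ hP2; rewrite eA eB; lia.
  split => // sA sB hu; apply: hmax; by exists sA, sB.
have [sA [sB [hu hsz]]] := hm.
have [E [hs hN hE]] := lower hA hB hu.
rewrite hsz in hE.
have hle : exa1 (A + B) (K_bip A B) <= 'C(A + B, 2) + m - (A + B).
  apply/bigmax_leqP => E' /andP [hs' /eqP hN'].
  have [sA' [sB' [hu' hE']]] := upper hA hB hs' hN'.
  have : size sA' + size sB' <= m by apply: hmax; exists sA', sB'.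
  move: hE'; set x := #|E'|; set y := 'C(A + B, 2); lia.
have hge : #|E| <= exa1 (A + B) (K_bip A B).
  by apply: (@leq_bigmax_cond _ _ (fun E0 : {set {set 'I_(A + B)}} => #|E0|) E); rewrite hs hN eqxx.
have [sA' [sB' [hu' hE']]] := upper hA hB hs hN.
have : size sA' + size sB' <= m by apply: hmax; exists sA', sB'.
move: hle hge hE hE'; set x := exa1 _ _; set y := 'C(A + B, 2); set z := #|E|; lia.
Qed.
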